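(* Let $u$ be implemented by a network of depth $\mathcal D$ and width $\mathcal W$ with activations in $\{\mathrm{ReLU}^2,\mathrm{ReLU}^3\}$ (respectively in $\{\mathrm{ReLU}^3\}$). Then for each $i=1,\dots,d$, the partial derivative $D_iu$ is implemented by a network of depth $\mathcal D+2$ and width at most $(\mathcal D+2)\mathcal W$ with activations in $\{\mathrm{ReLU},\mathrm{ReLU}^2,\mathrm{ReLU}^3\}$ (respectively in $\{\mathrm{ReLU}^2,\mathrm{ReLU}^3\}$). Moreover, the networks implementing $D_1u,\dots,D_du$ can be chosen with the same architecture.
   Context: $\mathrm{ReLU}^k(x)=(\max\{x,0\})^k$ for $k\ge1$. A function $u:\mathbb R^d\to\mathbb R$ is implemented by a network of depth $\mathcal D$ and width $\mathcal W$ with activations in $\Phi$ if there are $n_0=d,n_1,\dots,n_{\mathcal D}=1$ with $\max_\ell n_\ell\le\mathcal W$, $A_\ell\in\mathbb R^{n_\ell\times n_{\ell-1}}$, $b_\ell\in\mathbb R^{n_\ell}$, such that $f_0=x$, $(f_\ell)_q=\rho^{(\ell)}_q((A_\ell f_{\ell-1}+b_\ell)_q)$ for $\ell=1,\dots,\mathcal D-1$ with each $\rho^{(\ell)}_q\in\Phi$, and $u=A_{\mathcal D}f_{\mathcal D-1}+b_{\mathcal D}$. ''Same architecture'' means the same depth, layer sizes and assignment of activation functions to units (only the weights differ). *)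

(* Defs.v *)
From HB Require Import structures.
From mathcomp Require Import all_boot all_order all_algebra.
From mathcomp Require Import all_classical all_reals all_analysis.
 Unset Printing Implicit Defensive.
Import Order.TTheory GRing.Theory Num.Theory.
Import numFieldNormedType.Exports.
Local Open Scope ring_scope.

Definition reluk {R : realType} (k : nat) (x : R) : R := (Num.max x 0) ^+ k.

(* Hidden-layer values f_l of a network.
   n l        : size of layer l (n 0 = d input, n D = 1 output)
   rho l q    : exponent k of the activation ReLU^k used at unit q of layer l
   A l q p    : entry (q,p) of the weight matrix A_l (only q < n l, p < n (l-1) used)
   b l q      : entry q of the bias b_l *)
Fixpoint net_layer {R : realType} (n : nat -> nat) (rho : nat -> nat -> nat)
  (A : nat -> nat -> nat -> R) (b : nat -> nat -> R) (x : nat -> R) (l : nat)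
  : nat -> R :=
  match l with
  | 0 => x
  | l'.+1 => fun q =>
      reluk (rho l q)
        (\sum_(p < n l') A l q p * net_layer n rho A b x l' p + b l q)
  end.

Definition net_out {R : realType} (D : nat) (n : nat -> nat)
  (rho : nat -> nat -> nat) (A : nat -> nat -> nat -> R) (b : nat -> nat -> R)
  (x : nat -> R) : R :=
  \sum_(p < n D.-1) A D 0%N p * net_layer n rho A b x D.-1 p + b D 0%N.

Definition coords {R : realType} {d : nat} (x : 'rV[R]_d) : nat -> R :=
  fun i => if @insub nat (fun k => (k < d)%N) 'I_d i is Some j then x ord0 j else 0.

(* u : R^d -> R is implemented by a network of depth D and width W with
   activations in Phi (given as the set of exponents k of ReLU^k), with the
   architecture (layer sizes n, activation assignment rho). *)
Definition implements_with {R : realType} (d D W : nat) (Phi : seq nat)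
  (n : nat -> nat) (rho : nat -> nat -> nat) (u : 'rV[R]_d -> R) : Prop :=
  (0 < D)%N /\ n 0%N = d /\ n D = 1%N /\
      (forall l, (l <= D)%N -> (n l <= W)%N) /\
      (forall l q, (1 <= l < D)%N -> (q < n l)%N -> rho l q \in Phi) /\
      (exists (A : nat -> nat -> nat -> R) (b : nat -> nat -> R),
        forall x, u x = net_out D n rho A b (coords x)).

Definition implements {R : realType} (d D W : nat) (Phi : seq nat)
  (u : 'rV[R]_d -> R) : Prop :=
  exists n rho, @implements_with R d D W Phi n rho u.

Definition partial {R : realType} {d : nat} (i : 'I_d) (u : 'rV[R]_d -> R)
  : 'rV[R]_d -> R :=
  fun x => 'D_(delta_mx 0 i) u x.

(* Main.v *)
Require Import Defs.
From mathcomp Require Import all_boot all_order all_algebra.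
From mathcomp Require Import all_classical all_reals all_analysis.
From HB Require Import structures.
From mathcomp Require Import zify ring lra.
Import Order.TTheory GRing.Theory Num.Theory.
Import numFieldNormedType.Exports.
Local Open Scope ring_scope.

Section An.
Variable R : realType.

Lemma is_derive_comp1 (f g : R -> R) (x df dg : R) : is_derive x 1 f df ->
  is_derive (f x) 1 g dg -> is_derive x 1 (g \o f) (dg * df).
Proof.
move=> [fd <-] [gd <-]; apply: DeriveDef.
  apply/derivable1_diffP; apply: differentiable_comp; exact/derivable1_diffP.
by rewrite -derive1E derive1_comp // !derive1E.
Qed.

Lemma reluk_pos k (y : R) : 0 <= y -> reluk k y = y ^+ k.
Proof. by move=> y0; rewrite /reluk max_l. Qed.
Lemma reluk_neg k (y : R) : y <= 0 -> reluk k y = 0 ^+ k.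
Proof. by move=> y0; rewrite /reluk max_r. Qed.

Lemma reluk_cont k : continuous (@reluk R k).
Proof.
move=> y; rewrite /reluk.
apply: (@continuous_comp _ _ _ (fun t : R => Num.max t 0) (fun t => t ^+ k)).
  apply: continuous_max => //; exact: cvg_cst.
exact: exprn_continuous.
Qed.

End An.


Section An.
Variable R : realType.

Lemma reluk_is_derive (k : nat) (y : R) : (2 <= k)%N ->
  is_derive y 1 (@reluk R k) (k%:R * reluk k.-1 y).
Proof.
case: k => [|[|k]] // _ /=.
have [y0|y0|->] := ltgtP y 0.
- have -> : reluk k.+1 y = 0 by rewrite reluk_neg ?ltW // expr0n.
  rewrite mulr0.
  apply: (@near_eq_is_derive _ _ _ (cst 0)).
  rewrite /cst /=.
  have : y \in `]-oo, 0[ by rewrite in_itv /=.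
  move/near_in_itvNyo; apply: filterS => t; rewrite in_itv /= => t0.
  by rewrite reluk_neg ?ltW // expr0n.
- rewrite reluk_pos ?ltW //.
  have H := @is_deriveX R R (@id R) k.+2 y 1 1 (is_derive_id _ _).
  apply: (@near_eq_is_derive _ _ _ ((@id R) ^+ k.+2) _ y 1 (k.+2%:R * y ^+ k.+1)); last first.
    exact: (is_derive_eq H (mulr1 _)).
  have : y \in `]0, +oo[ by rewrite in_itv /= y0.
  move/near_in_itvoy; apply: filterS => t; rewrite in_itv /= andbT => t0.
  by rewrite reluk_pos ?ltW // exprfctE.
- have E0 : reluk k.+1 (0:R) = 0.
    by rewrite /reluk max_r // expr0n.
  have Ek : reluk k.+2 (0:R) = 0.
    by rewrite /reluk max_r // expr0n.
  have q : ((fun h : R => h^-1 *: ((@reluk R k.+2 \o shift 0) (h *: 1) - reluk k.+2 0)) @ 0^' --> (0:R))%classic.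
    apply: (@cvg_trans _ ((@reluk R k.+1) @ 0^')%classic); last first.
      have := @reluk_cont R k.+1 0. rewrite /continuous_at E0 => C.
      exact: (cvg_trans (cvg_app _ (cvg_within _)) C).
    apply: near_eq_cvg; near=> h.
    rewrite /= /shift /= Ek subr0 addr0.
    have hA : h%:A = h := mulr1 h.
    rewrite /reluk hA -[h^-1 *: _]/(h^-1 * _).
    have [hp|hn] := leP 0 h.
      rewrite [h ^+ k.+2]exprS mulKf //; near: h; exact: nbhs_dnbhs_neq.
    by rewrite !expr0n /= mulr0.
  apply: DeriveDef; first exact: (cvgP _ q).
  rewrite E0 mulr0.
  exact: cvg_lim q.
Unshelve. all: by end_near.
Qed.

End An.


Section An.
Variable R : realType.


Lemma is_derive_sumf N (H : nat -> R -> R) (dH : nat -> R) (x : R) :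
  (forall p, (p < N)%N -> is_derive x 1 (H p) (dH p)) ->
  is_derive x 1 (fun t => \sum_(p < N) H p t) (\sum_(p < N) dH p).
Proof.
move=> hd.
have := @is_derive_sum R R R N (fun i : 'I_N => H i) x 1 (fun i => dH i) (fun i => hd i (ltn_ord i)).
congr is_derive; apply: funext => t; by rewrite fct_sumE.
Qed.

Lemma is_derive_lin (a s : R) : is_derive (0:R) 1 (fun t : R => a + t * s) s.
Proof.
have h1 := @is_deriveM R R (@id R) (cst s) 0 1 1 0 (is_derive_id _ _) (is_derive_cst _ _ _).
have h2 := is_deriveD (@is_derive_cst R R R a 0 1) h1.
apply: (is_derive_eq h2).
by rewrite /= scaler0 add0r add0r [_ *: _]mulr1.
Qed.


Lemma is_derive_addc (f : R -> R) (x df a : R) :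
  is_derive x 1 f df -> is_derive x 1 (fun t => f t + a) df.
Proof.
move=> h; have h2 := is_deriveD h (@is_derive_cst R R R a x 1).
by apply: (is_derive_eq h2); rewrite addr0.
Qed.

Lemma is_derive_cmul (f : R -> R) (x df a : R) :
  is_derive x 1 f df -> is_derive x 1 (fun t => a * f t) (a * df).
Proof.
move=> h; have h2 := is_deriveM (@is_derive_cst R R R a x 1) h.
apply: (is_derive_eq h2).
by rewrite /= scaler0 addr0.
Qed.

Lemma is_derive_reluk_comp (f : R -> R) (x df : R) k : (2 <= k)%N ->
  is_derive x 1 f df -> is_derive x 1 (fun t => reluk k (f t)) (k%:R * reluk k.-1 (f x) * df).
Proof. by move=> k2 h; exact (@is_derive_comp1 R f (reluk k) x df _ h (@reluk_is_derive R k (f x) k2)). Qed.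

Section Net.
Variables (n : nat -> nat) (rho : nat -> nat -> nat) (A : nat -> nat -> nat -> R)
  (b : nat -> nat -> R) (c e : nat -> R).

Definition lin (t : R) : nat -> R := fun p => c p + t * e p.

Lemma lin0 : lin 0 = c.
Proof. by apply: funext => p; rewrite /lin mul0r addr0. Qed.

Definition zpre (l q : nat) : R :=
  \sum_(p < n l) A l.+1 q p * net_layer n rho A b c l p + b l.+1 q.

Fixpoint gder (l : nat) : nat -> R :=
  match l with
  | 0 => e
  | l'.+1 => fun q => (rho l'.+1 q)%:R * reluk (rho l'.+1 q).-1 (zpre l' q) *
                     \sum_(p < n l') A l'.+1 q p * gder l' p
  end.

Lemma net_deriv l : (forall l' q, (1 <= l' <= l)%N -> (q < n l')%N -> (2 <= rho l' q)%N) ->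
  forall q, (l == 0%N) || (q < n l)%N ->
  is_derive (0:R) 1 (fun t => net_layer n rho A b (lin t) l q) (gder l q).
Proof.
elim: l => [|l IH] hr q hq /=.
  exact: is_derive_lin.
have inner : is_derive (0:R) 1
   (fun t => \sum_(p < n l) A l.+1 q p * net_layer n rho A b (lin t) l p + b l.+1 q)
   (\sum_(p < n l) A l.+1 q p * gder l p).
  apply: is_derive_addc.
  apply: (@is_derive_sumf (n l) (fun p t => A l.+1 q p * net_layer n rho A b (lin t) l p) (fun p => A l.+1 q p * gder l p)) => p hp.
  apply: (@is_derive_cmul (fun t => net_layer n rho A b (lin t) l p)); apply: IH => //.
  by move=> l' q' /andP[h1 h2]; apply: hr; rewrite h1 /= ltnW.
  by rewrite hp orbT.
have hk : (2 <= rho l.+1 q)%N by apply: hr => //; move: hq; rewrite /= leqnn.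
have H := @is_derive_reluk_comp _ _ _ _ hk inner.
apply: (is_derive_eq H).
by rewrite lin0.
Qed.

Lemma net_out_deriv D : (forall l' q, (1 <= l' <= D.-1)%N -> (q < n l')%N -> (2 <= rho l' q)%N) ->
  is_derive (0:R) 1 (fun t => net_out D n rho A b (lin t))
    (\sum_(p < n D.-1) A D 0%N p * gder D.-1 p).
Proof.
move=> hr; apply: is_derive_addc.
apply: (@is_derive_sumf (n D.-1) (fun p t => A D 0%N p * net_layer n rho A b (lin t) D.-1 p) (fun p => A D 0%N p * gder D.-1 p)) => p hp.
apply: (@is_derive_cmul (fun t => net_layer n rho A b (lin t) D.-1 p)); apply: net_deriv => //.
by rewrite hp orbT.
Qed.

End Net.

Lemma coords_line d (i : 'I_d) (x : 'rV[R]_d) (t : R) :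
  coords (t *: delta_mx 0 i + x) = lin (coords x) (fun p => (p == i :> nat)%:R) t.
Proof.
apply: funext => p; rewrite /lin /coords.
case: insubP => [j jd vj|] /=.
  rewrite !mxE /= addrC; congr (_ + _).
  by rewrite -[j == i]/(val j == val i) vj.
move=> pd; case: eqP => [pi|]; last by rewrite mulr0 addr0.
by move: pd; rewrite pi ltn_ord.
Qed.

Lemma partial_line d (i : 'I_d) (u : 'rV[R]_d -> R) (x : 'rV[R]_d) (dv : R) :
  is_derive (0:R) 1 (fun t => u (t *: delta_mx 0 i + x)) dv -> partial i u x = dv.
Proof.
move=> [_ <-]; rewrite /partial /derive.
have E : (fun h : R => h^-1 *: ((u \o shift x) (h *: delta_mx 0 i) - u x)) =
  (fun h : R => h^-1 *: (((fun t => u (t *: delta_mx 0 i + x)) \o shift 0) (h *: 1) -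
       (fun t : R => u (t *: delta_mx 0 i + x)) 0)).
  apply: funext => h /=.
  rewrite /shift /= scale0r add0r addr0.
  by rewrite [h *: (1:R)]mulr1.
by rewrite E.
Qed.

End An.

Lemma reluk_pos' {R : realType} k (y : R) : 0 <= y -> reluk k y = y ^+ k.
Proof. by move=> y0; rewrite /reluk max_l. Qed.
Lemma reluk_neg' {R : realType} k (y : R) : y <= 0 -> reluk k y = 0 ^+ k.
Proof. by move=> y0; rewrite /reluk max_r. Qed.

Section Comb.
Variable R : realType.

Lemma sum4K (F : nat -> R) K :
  \sum_(p < 4 * K) F p = \sum_(r < K) (F (4 * r)%N + F (4 * r + 1)%N + F (4 * r + 2)%N + F (4 * r + 3)%N).
Proof.
elim: K => [|K IH]; first by rewrite !big_ord0.
rewrite (_ : (4 * K.+1 = 4 * K + 4)%N); last by lia.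
rewrite big_split_ord IH [RHS]big_ord_recr /=; congr (_ + _).
by rewrite !big_ord_recr big_ord0 /= add0r addn0.
Qed.

Lemma sum_blocks (F : nat -> R) a g K :
  \sum_(p < a + g + 4 * K) F p = \sum_(p < a) F p + \sum_(r < g) F (a + r)%N +
    \sum_(r < K) (F (a + g + 4 * r)%N + F (a + g + 4 * r + 1)%N + F (a + g + 4 * r + 2)%N + F (a + g + 4 * r + 3)%N).
Proof.
have S := sum4K (fun p => F (a + g + p)%N) K; simpl in S.
have -> : \sum_(r < K) (F (a + g + 4 * r)%N + F (a + g + 4 * r + 1)%N + F (a + g + 4 * r + 2)%N + F (a + g + 4 * r + 3)%N) = \sum_(p < 4 * K) F (a + g + p)%N.
  by rewrite S; apply: eq_bigr => r _; rewrite !addnA.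
rewrite big_split_ord; congr (_ + _).
by rewrite big_split_ord.
Qed.

Definition R2 (t : R) := reluk 2 t.
Definition cA (j : nat) : R := if odd j then -1 else 1.
Definition cH (j : nat) : R := if (j == 0%N) || (j == 3%N) then 1 else -1.
Definition sg (j : nat) : R := if (j < 2)%N then 1 else -1.

Lemma R2N (t : R) : R2 t + R2 (- t) = t ^+ 2.
Proof.
rewrite /R2; have [t0|t0] := leP 0 t.
  by rewrite reluk_pos' // reluk_neg' ?oppr_le0 // expr0n addr0.
by rewrite reluk_neg' ?ltW // reluk_pos' ?oppr_ge0 ?ltW // expr0n add0r sqrrN.
Qed.

Lemma key4 (a h : R) :
  sg 0 * R2 (cA 0 * a + cH 0 * h) + sg 1 * R2 (cA 1 * a + cH 1 * h) +
  sg 2 * R2 (cA 2 * a + cH 2 * h) + sg 3 * R2 (cA 3 * a + cH 3 * h) = 4 * (a * h).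
Proof.
rewrite /sg /cA /cH /= !mul1r !mulN1r.
have e1 : - a + - h = - (a + h) by rewrite opprD.
have e2 : - a + h = - (a + - h) by rewrite opprD opprK.
rewrite e1 e2 -!addrA addrA R2N -opprD R2N.
ring.
Qed.

End Comb.

Section Cons.
Variables (R : realType) (D : nat) (n : nat -> nat) (rho : nat -> nat -> nat)
  (A : nat -> nat -> nat -> R) (b : nat -> nat -> R) (i : nat) (c : nat -> R).

Definition sF l := if (l <= D - 2)%N then n l else 0%N.
Definition sG l := if (l <= D - 1)%N then n l else 0%N.
Definition KK l := if (2 <= l)%N then n l.-1 else 0%N.
Notation oS l := (sF l + sG l)%N.

Definition n' l := if l == 0%N then n 0 else if (l <= D)%N then (oS l + 4 * KK l)%N
  else if l == D.+1 then 4%N else 1%N.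

Definition rho' l q := if (1 <= l <= D)%N then
  (if (q < sF l)%N then rho l q else if (q < oS l)%N then (rho l (q - sF l)).-1 else 2%N)
  else 2%N.

Definition A' l q p : R :=
  if l == 1%N then (if (q < sF 1)%N then A 1 q p else A 1 (q - sF 1) p)
  else if (l <= D)%N then
    (if (q < sF l)%N then (if (p < sF l.-1)%N then A l q p else 0)
     else if (q < oS l)%N then (if (p < sF l.-1)%N then A l (q - sF l) p else 0)
     else (if p == (sF l.-1 + (q - oS l) %/ 4)%N then cA R ((q - oS l) %% 4) else 0) +
          (if (3 <= l)%N && (oS l.-1 <= p)%N then
             cH R ((q - oS l) %% 4) * A l.-1 ((q - oS l) %/ 4) ((p - oS l.-1) %/ 4) *
             (rho l.-2 ((p - oS l.-1) %/ 4))%:R / 4 * sg R ((p - oS l.-1) %% 4)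
           else 0))
  else if l == D.+1 then
    (if (oS D <= p)%N then
       cA R q * A D 0 ((p - oS D) %/ 4) * (rho D.-1 ((p - oS D) %/ 4))%:R / 4 *
       sg R ((p - oS D) %% 4)
     else 0)
  else (if (p < 4)%N then sg R p / 4 else 0).

Definition b' l q : R :=
  if l == 1%N then (if (q < sF 1)%N then b 1 q else b 1 (q - sF 1))
  else if (l <= D)%N then
    (if (q < sF l)%N then b l q
     else if (q < oS l)%N then b l (q - sF l)
     else if l == 2%N then cH R ((q - oS l) %% 4) * A 1 ((q - oS l) %/ 4) i else 0)
  else if l == D.+1 then cH R q else 0.

Definition ee (p : nat) : R := (p == i)%:R.
Definition ff l q := net_layer n rho A b c l q.
Definition aa l r := reluk (rho l r).-1 (zpre R n rho A b c l.-1 r).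
Definition hh l r := \sum_(p < n l.-1) A l r p * gder R n rho A b c ee l.-1 p.
Definition gg l r := gder R n rho A b c ee l r.
Definition NN l q := net_layer n' rho' A' b' c l q.


Hypothesis hD : (2 <= D)%N.
Hypothesis hi : (i < n 0)%N.

Lemma NNS l q : NN l.+1 q = reluk (rho' l.+1 q) (\sum_(p < n' l) A' l.+1 q p * NN l p + b' l.+1 q).
Proof. by []. Qed.

Lemma n'E m : (1 <= m <= D)%N -> n' m = (sF m + sG m + 4 * KK m)%N.
Proof. by case/andP=> h1 h2; rewrite /n' h2; case: m h1 h2. Qed.

Lemma sum_layer m (w : nat -> R) : (1 <= m <= D)%N ->
  \sum_(p < n' m) w p * NN m p = \sum_(p < sF m) w p * NN m p +
   \sum_(r < sG m) w (sF m + r)%N * NN m (sF m + r)%N +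
   \sum_(r < KK m) (w (oS m + 4 * r)%N * NN m (oS m + 4 * r)%N +
                   w (oS m + 4 * r + 1)%N * NN m (oS m + 4 * r + 1)%N +
                   w (oS m + 4 * r + 2)%N * NN m (oS m + 4 * r + 2)%N +
                   w (oS m + 4 * r + 3)%N * NN m (oS m + 4 * r + 3)%N).
Proof. by move=> hm; rewrite n'E //; exact (@sum_blocks R (fun p => w p * NN m p) _ _ _). Qed.

Lemma sum_pick N r (x : R) (G : nat -> R) : (r < N)%N ->
  \sum_(r' < N) (if (r' == r :> nat) then x else 0) * G r' = x * G r.
Proof.
move=> hr; rewrite (bigD1 (Ordinal hr)) //= eqxx big1 ?addr0 // => k hk.
by rewrite ifF ?mul0r //; apply: contraNF hk => /eqP e; apply/eqP/val_inj.
Qed.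

Definition Pl l : Prop := [/\ (forall q, (q < sF l)%N -> NN l q = ff l q),
  (forall r, (r < sG l)%N -> NN l (sF l + r)%N = aa l r) &
  ((2 <= l)%N -> forall r j, (r < n l.-1)%N -> (j < 4)%N ->
     NN l (oS l + 4 * r + j)%N = R2 R (cA R j * aa l.-1 r + cH R j * hh l.-1 r))].

Lemma gg_of l : Pl l -> (2 <= l)%N -> forall r, (r < n l.-1)%N ->
  gg l.-1 r = (rho l.-1 r)%:R / 4 * (sg R 0 * NN l (oS l + 4 * r)%N + sg R 1 * NN l (oS l + 4 * r + 1)%N +
     sg R 2 * NN l (oS l + 4 * r + 2)%N + sg R 3 * NN l (oS l + 4 * r + 3)%N).
Proof.
move=> [_ _ P3] hl r hr.
rewrite -{1}(addn0 (oS l + 4 * r)%N) !P3 // key4.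
clear P3; case: l hl hr => [|[|m]] // _ hr /=.
rewrite /gg /aa /hh /=.
by field.
Qed.

Ltac ifs := repeat (case: ifPn => ?; try (exfalso; lia)).

Lemma Pl1 : Pl 1.
Proof.
split => [q hq | r hr | //].
- rewrite (NNS 0 q) /ff /= /rho' /b' /=; ifs.
  congr (reluk _ (_ + _)); apply: eq_bigr => p _; rewrite /A' /=; by ifs.
- rewrite (NNS 0 (sF 1 + r)) /aa /= /rho' /b' /=; ifs.
  rewrite addKn; congr (reluk _ (_ + _)); apply: eq_bigr => p _; rewrite /A' /=; ifs.
  by rewrite addKn.
Qed.

Lemma sF_lt q l : (q < sF l)%N -> (l <= D - 2)%N.
Proof. by rewrite /sF; case: ifP. Qed.
Lemma sG_lt q l : (q < sG l)%N -> (l <= D - 1)%N.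
Proof. by rewrite /sG; case: ifP. Qed.
Lemma sFE l : (l <= D - 2)%N -> sF l = n l.
Proof. by rewrite /sF => ->. Qed.
Lemma sGE l : (l <= D - 1)%N -> sG l = n l.
Proof. by rewrite /sG => ->. Qed.
Lemma KKE l : (2 <= l)%N -> KK l = n l.-1.
Proof. by rewrite /KK => ->. Qed.
Lemma KK1 : KK 1 = 0%N.
Proof. by []. Qed.

Lemma dec_d o r k : (k < 4)%N -> ((o + 4 * r + k - o) %/ 4 = r)%N.
Proof. lia. Qed.
Lemma dec_m o r k : (k < 4)%N -> ((o + 4 * r + k - o) %% 4 = k)%N.
Proof. lia. Qed.
Lemma dec_d0 o r : ((o + 4 * r - o) %/ 4 = r)%N.
Proof. lia. Qed.
Lemma dec_m0 o r : ((o + 4 * r - o) %% 4 = 0)%N.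
Proof. lia. Qed.

Lemma A'S l r j p : (1 <= l)%N -> (l.+1 <= D)%N -> (j < 4)%N ->
  A' l.+1 (oS l.+1 + 4 * r + j)%N p = (if p == (sF l + r)%N then cA R j else 0) +
    (if (2 <= l)%N && (oS l <= p)%N then
       cH R j * A l r ((p - oS l) %/ 4) * (rho l.-1 ((p - oS l) %/ 4))%:R / 4 * sg R ((p - oS l) %% 4)
     else 0).
Proof.
move=> l1 lD hj.
rewrite /A' /= dec_d // dec_m //.
by ifs.
Qed.

Lemma sum_pick2 N r (G : nat -> R) : (r < N)%N ->
  \sum_(r' < N) G r' * (r' == r :> nat)%:R = G r.
Proof.
move=> hr; rewrite (bigD1 (Ordinal hr)) //= eqxx mulr1 big1 ?addr0 // => k hk.
suff -> : (k == r :> nat) = false by rewrite mulr0.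
by apply: contraNF hk => /eqP e; apply/eqP/val_inj.
Qed.


Lemma Pl_step l : (1 <= l)%N -> (l.+1 <= D)%N -> Pl l -> Pl l.+1.
Proof.
move=> l1 lD [IH1 IH2 IH3].
have hm : (1 <= l <= D)%N by lia.
split.
- move=> q hq; have hl := sF_lt _ _ hq.
  rewrite (NNS l q) /ff [net_layer _ _ _ _ _ l.+1 q]/= /rho' /b'; ifs.
  congr (reluk _ (_ + _)).
  rewrite sum_layer //.
  rewrite [X in _ + X = _]big1 ?addr0; last first.
    move=> r _; rewrite /A' /=; ifs; by rewrite !mul0r !add0r.
  rewrite [X in _ + X = _]big1 ?addr0; last first.
    move=> r _; rewrite /A' /=; ifs; by rewrite !mul0r.
  rewrite (eq_bigr (fun p : 'I_(sF l) => A l.+1 q p * ff l p)); last first.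
    move=> p _; have hp := ltn_ord p; rewrite IH1 // /A' /=; by ifs.
  by rewrite sFE //; lia.
- move=> r hr; have hl := sG_lt _ _ hr.
  rewrite (NNS l (sF l.+1 + r)) /aa /zpre /rho' /b'; ifs.
  rewrite addKn; congr (reluk _ (_ + _)).
  rewrite sum_layer //.
  rewrite [X in _ + X = _]big1 ?addr0; last first.
    move=> r' _; rewrite /A' /=; ifs; by rewrite !mul0r !add0r.
  rewrite [X in _ + X = _]big1 ?addr0; last first.
    move=> r' _; rewrite /A' /=; ifs; by rewrite !mul0r.
  rewrite (eq_bigr (fun p : 'I_(sF l) => A l.+1 r p * ff l p)); last first.
    move=> p _; have hp := ltn_ord p; rewrite IH1 // /A' /=; ifs; by rewrite addKn.
  by rewrite sFE //; lia.
- move=> _ r j hr hj /=.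
  have hsG : sG l = n l by apply: sGE; lia.
  have hrG : (r < sG l)%N by rewrite hsG.
  rewrite (NNS l (oS l.+1 + 4 * r + j)%N) /rho'; ifs.
  rewrite /R2 sum_layer //; congr (reluk _ _).
  rewrite [X in X + _ + _ + _ = _]big1 ?add0r; last first.
    move=> p _; have hp := ltn_ord p; rewrite A'S //; ifs; by rewrite !add0r !mul0r.
  rewrite (eq_bigr (fun r' : 'I_(sG l) => (if (r' == r :> nat) then cA R j else 0) * NN l (sF l + r'))); last first.
    move=> r' _; have hr' := ltn_ord r'; rewrite A'S //; ifs; by rewrite ?addr0.
  rewrite (@sum_pick (sG l) r (cA R j) (fun r' => NN l (sF l + r')%N) hrG) IH2 //.
  have [E1|l2] : l = 1%N \/ (2 <= l)%N by lia.
    subst l; rewrite KK1 big_ord0 addr0 /b'; ifs; rewrite dec_d // dec_m //.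
    by rewrite /hh /= /ee sum_pick2.
  rewrite /b'; ifs; rewrite addr0 KKE //.
  congr (_ + _); rewrite /hh mulr_sumr; apply: eq_bigr => r' _.
  have hr' := ltn_ord r'.
  have G := gg_of l (And3 IH1 IH2 IH3) l2 r' hr'; rewrite /gg in G; rewrite G.
  rewrite !A'S //; ifs.
  rewrite !dec_d0 !dec_m0 !dec_d // !dec_m //.
  ring.
Qed.


Lemma Pl_all l : (1 <= l <= D)%N -> Pl l.
Proof.
elim: l => [//|l IH] /andP[_ lD].
have [->|l1] : l = 0%N \/ (1 <= l)%N by lia.
  exact: Pl1.
apply: Pl_step => //; apply: IH; lia.
Qed.

Definition yy := \sum_(r < n D.-1) A D 0 r * gg D.-1 r.

Lemma NN_Dp1 j : (j < 4)%N -> NN D.+1 j = R2 R (cA R j * yy + cH R j * 1).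
Proof.
move=> hj.
have hD1 : (1 <= D <= D)%N by lia.
rewrite (NNS D j) /rho' /b'; ifs.
rewrite /R2 mulr1 sum_layer; last by lia.
congr (reluk _ (_ + _)).
rewrite [X in X + _ + _ = _]big1 ?add0r; last first.
  move=> p _; have hp := ltn_ord p; rewrite /A'; ifs; by rewrite mul0r.
rewrite [X in X + _ = _]big1 ?add0r; last first.
  move=> p _; have hp := ltn_ord p; rewrite /A'; ifs; by rewrite mul0r.
rewrite KKE // /yy mulr_sumr; apply: eq_bigr => r' _.
have hr' := ltn_ord r'.
have G := gg_of D (Pl_all D hD1) hD r' hr'; rewrite G.
rewrite /A'; ifs.
rewrite !dec_d0 !dec_m0 !dec_d // !dec_m //.
ring.
Qed.

Lemma out_val : net_out D.+2 n' rho' A' b' c = yy.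
Proof.
rewrite /net_out.
change (\sum_(p < n' D.+1) A' D.+2 0 p * NN D.+1 p + b' D.+2 0 = yy).
rewrite (_ : n' D.+1 = 4%N); last by rewrite /n'; ifs.
rewrite (eq_bigr (fun p : 'I_4 => sg R p / 4 * R2 R (cA R p * yy + cH R p * 1))); last first.
  move=> p _; have hp := ltn_ord p; rewrite NN_Dp1 // /A'; by ifs.
rewrite /b'; ifs.
rewrite !big_ord_recr big_ord0 /=.
have K := key4 R yy 1.
rewrite addr0 add0r.
transitivity ((sg R 0 * R2 R (cA R 0 * yy + cH R 0 * 1) + sg R 1 * R2 R (cA R 1 * yy + cH R 1 * 1) +
  sg R 2 * R2 R (cA R 2 * yy + cH R 2 * 1) + sg R 3 * R2 R (cA R 3 * yy + cH R 3 * 1)) / 4).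
  by ring.
by rewrite K; field.
Qed.

End Cons.

Ltac ifs := repeat (case: ifPn => ?; try (exfalso; lia)).

Lemma n'_width D n W : (2 <= D)%N -> (1 <= W)%N -> (forall l, (l <= D)%N -> (n l <= W)%N) ->
  forall l, (l <= D + 2)%N -> (n' D n l <= (D + 2) * W)%N.
Proof.
move=> hD hW nW l hl.
have f1 : (W <= (D + 2) * W)%N by nia.
have f4 : (4 * W <= (D + 2) * W)%N by nia.
have f5 : (3 <= D)%N -> (5 * W <= (D + 2) * W)%N by nia.
have f6 : (4 <= D)%N -> (6 * W <= (D + 2) * W)%N by nia.
case: l hl => [|l] hl; first by rewrite /n' /=; have := nW 0%N; lia.
have g1 := nW l.+1; have g2 := nW l.
rewrite /n' /sF /sG /KK /=; ifs; lia.
Qed.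

Lemma rho'_in D n rho (Phi Phi' : seq nat) :
  (forall k, k \in Phi -> [/\ (2 <= k)%N, k \in Phi' & k.-1 \in Phi']) -> (2%N \in Phi') ->
  (forall l q, (1 <= l < D)%N -> (q < n l)%N -> rho l q \in Phi) ->
  forall l q, (1 <= l < D + 2)%N -> (q < n' D n l)%N -> rho' D n rho l q \in Phi'.
Proof.
move=> hP h2 hr l q hl hq.
rewrite /rho'; case: ifPn => h1 //; case: ifPn => h3.
- have h := sF_lt _ _ _ _ h3.
  have [_ -> _] := hP _ (hr l q ltac:(lia) ltac:(by rewrite -(sFE D n l h))).
  done.
- case: ifPn => h4 //.
  have h5 : (q - sF D n l < sG D n l)%N by lia.
  have h := sG_lt _ _ _ _ h5.
  have [_ _ ->] := hP _ (hr l (q - sF D n l)%N ltac:(lia) ltac:(by rewrite -(sGE D n l h))).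
  done.
Qed.

Lemma main_gen (R : realType) (Phi Phi' : seq nat)
  (hP : forall k, k \in Phi -> [/\ (2 <= k)%N, k \in Phi' & k.-1 \in Phi'])
  (h2 : 2%N \in Phi') d D W (u : 'rV[R]_d -> R) :
  implements d D W Phi u -> exists n rho, forall i : 'I_d,
     implements_with d (D + 2)%N ((D + 2) * W)%N Phi' n rho (partial i u).
Proof.
move=> [n [rho [D0 [n0 [nD [nW [hr [A [b hu]]]]]]]]].
have W1 : (1 <= W)%N by have := nW D (leqnn D); rewrite nD.
have hr2 : forall l' q, (1 <= l' <= D.-1)%N -> (q < n l')%N -> (2 <= rho l' q)%N.
  by move=> l' q hl hq; have [] := hP _ (hr l' q ltac:(lia) hq).
have deriv : forall (i : 'I_d) x, partial i u x =
    \sum_(p < n D.-1) A D 0%N p * gder R n rho A b (coords x) (fun p => (p == i :> nat)%:R) D.-1 p.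
  move=> i x; apply: partial_line.
  have E : (fun t : R => u (t *: delta_mx 0 i + x)) =
      (fun t => net_out D n rho A b (lin R (coords x) (fun p => (p == i :> nat)%:R) t)).
    by apply: funext => t; rewrite hu coords_line.
  rewrite E; exact: net_out_deriv.
have [D1|D2] : D = 1%N \/ (2 <= D)%N by lia.
- subst D.
  exists (fun l => if l == 0%N then d else 1%N), (fun _ _ => 2%N) => i.
  split; first done. split; first done. split; first done.
  split.
    move=> l hl; case: ifP => _; last by lia.
    by have := nW 0%N isT; rewrite n0; lia.
  split; first done.
  exists (fun _ _ _ => 0), (fun l q => if l == 3%N then \sum_(p < n 0) A 1%N 0%N p * (p == i :> nat)%:R else 0) => x.
  rewrite deriv /net_out [X in _ = X + _]big1 ?add0r // => p _; by rewrite mul0r.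
- exists (n' D n), (rho' D n rho) => i.
  have hi : (i < n 0)%N by rewrite n0.
  split; first lia.
  split; first by rewrite /n' /= n0.
  split; first by rewrite /n'; ifs.
  split; first by move=> l hl; apply: n'_width.
  split; first exact: (rho'_in D n rho Phi Phi' hP h2 hr).
  exists (A' R D n rho A), (b' R D n A b i) => x.
  by rewrite deriv addn2 out_val.
Qed.

Local Close Scope ring_scope.

Theorem mainTheorem11 (R : realType) (d D W : nat) (u : 'rV[R]_d -> R) :
  (implements d D W [:: 2%N; 3%N] u ->
   exists n rho, forall i : 'I_d,
     implements_with d (D + 2) ((D + 2) * W) [:: 1%N; 2%N; 3%N] n rho (partial i u))
  /\
  (implements d D W [:: 3%N] u ->
   exists n rho, forall i : 'I_d,
     implements_with d (D + 2) ((D + 2) * W) [:: 2%N; 3%N] n rho (partial i u)).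
Proof.
split; apply: main_gen => //.
- by move=> k; rewrite !inE => /orP[] /eqP ->.
- by move=> k; rewrite !inE => /eqP ->.
Qed.
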